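(* For every rooted graph $(F,R)$ and integer $\ell\ge 1$, every $K\in \mathcal{F}^\ell$ satisfies \[e(K)\ge \rho(F,R)\,(v(K)-|R|).\]
   Context: A rooted graph $(F,R)$ is a graph $F$ with a root set $R\subsetneq V(F)$. $\mathcal{F}^\ell$ is the set of all graphs obtained as the union of $\ell$ distinct labeled copies of $F$ which all agree on the root set $R$. For $S\subseteq V(F)$, $e_S(F)$ is the number of edges of $F$ incident to a vertex of $S$, and $\rho(F,R)=\min_{\emptyset\ne S\subseteq V(F)\setminus R} e_S(F)/|S|$. $e(K)$ and $v(K)$ denote the numbers of edges and vertices of $K$. *)

(* Defs.v *)
From mathcomp Require Import all_boot all_order all_algebra.
Set Implicit Arguments. Unset Strict Implicit. Unset Printing Implicit Defensive.
Import Order.TTheory GRing.Theory Num.Theory.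

Definition edges (V : finType) (adj : rel V) : {set {set V}} :=
  [set [set x; y] | x in [set: V], y in [set: V] & adj x y].

Definition eS (V : finType) (adj : rel V) (S : {set V}) : nat :=
  #|[set f in edges adj | f :&: S != set0]|.

Definition ratioS (V : finType) (adj : rel V) (S : {set V}) : rat :=
  (eS adj S)%:R / (#|S|)%:R.

(* rho(F,R) = min over nonempty S subseteq V(F)\R of e_S(F)/|S|.
   The seed value ratioS adj (~: R) is itself one of the minimized values
   (when R is a proper subset), so this is exactly the minimum. *)
Definition rho (V : finType) (adj : rel V) (R : {set V}) : rat :=
  \big[Order.min/ratioS adj (~: R)]_(S : {set V} | (S != set0) && (S \subset ~: R))
     ratioS adj S.

(* A labeled copy of F in a host vertex set U: an injective map phi : V -> U;
   its vertex image and edge image. *)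
Definition copy_verts (V U : finType) (phi : V -> U) : {set U} :=
  phi @: [set: V].

Definition copy_edges (V U : finType) (adj : rel V) (phi : V -> U) : {set {set U}} :=
  [set [set phi x; phi y] | x in [set: V], y in [set: V] & adj x y].

Definition union_verts (V U : finType) (l : nat) (phi : 'I_l -> V -> U) : {set U} :=
  \bigcup_(i < l) copy_verts (phi i).

Definition union_edges (V U : finType) (adj : rel V) (l : nat) (phi : 'I_l -> V -> U)
  : {set {set U}} :=
  \bigcup_(i < l) copy_edges adj (phi i).

(* Main.v *)
Require Import Defs.
From mathcomp Require Import all_boot all_order all_algebra.
Import Order.TTheory GRing.Theory Num.Theory.
From Stdlib Require List.
Local Open Scope ring_scope.

Section Aux.
Variables (V U : finType) (adj : rel V) (R : {set V}) (f0 : V -> U).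

Lemma imset_set2 (f : V -> U) x y : f @: [set x; y] = [set f x; f y].
Proof. by rewrite imsetU1 imset_set1. Qed.

Lemma copy_edgesE (f : V -> U) :
  copy_edges adj f = (fun e : {set V} => f @: e) @: edges adj.
Proof.
apply/setP => E; apply/imset2P/imsetP.
- case=> x y _; rewrite !inE /= => Hxy ->.
  exists [set x; y]; first by apply/imset2P; exists x y; rewrite ?inE.
  by rewrite imset_set2.
- case=> e /imset2P [x y _]; rewrite !inE /= => Hxy -> ->.
  exists x y; rewrite ?inE //.
  by rewrite imset_set2.
Qed.

Lemma rho_le (S : {set V}) : S != set0 -> S \subset ~: R ->
  rho adj R * (#|S|)%:R <= (eS adj S)%:R.
Proof.
move=> S0 SR.
have le : rho adj R <= ratioS adj S.
  by apply: (bigmin_le_cond (ratioS adj (~: R)) (P := fun S => (S != set0) && (S \subset ~: R))); rewrite S0.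
have cS : (#|S|)%:R != 0 :> rat by rewrite pnatr_eq0 cards_eq0.
apply: le_trans (ler_wpM2r (ler0n _ _) le) _.
by rewrite /ratioS divfK.
Qed.

Definition Vs (s : seq (V -> U)) := \bigcup_(g <- s) copy_verts g.
Definition Es (s : seq (V -> U)) := \bigcup_(g <- s) copy_edges adj g.

Lemma Es_sub s e : e \in Es s -> e \subset Vs s.
Proof.
elim: s => [|g s IH]; first by rewrite /Es big_nil inE.
rewrite /Es /Vs !big_cons inE => /orP [|/IH H]; last first.
  by apply: subset_trans H (subsetUr _ _).
case/imset2P=> x y _ _ ->; apply: subset_trans (subsetUl _ _).
by apply/subsetP => z; rewrite !inE => /orP [] /eqP ->; apply/imsetP; [exists x|exists y]; rewrite ?inE.
Qed.

Lemma rho_le0 (S : {set V}) : S \subset ~: R ->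
  rho adj R * (#|S|)%:R <= (eS adj S)%:R.
Proof.
move=> SR; have [->|S0] := eqVneq S set0; last exact: rho_le.
by rewrite cards0 mulr0 ler0n.
Qed.

Lemma main_ind (f0inj : injective f0) (s : seq (V -> U)) :
  (forall g, List.In g s -> injective g /\ forall r, r \in R -> g r = f0 r) ->
  rho adj R * ((#|(f0 @: R) :|: Vs s|)%:R - (#|R|)%:R) <= (#|Es s|)%:R.
Proof.
elim: s => [|f s IH] H.
  by rewrite /Vs /Es !big_nil setU0 card_imset // subrr mulr0 cards0.
have [finj fR] := H f (or_introl erefl).
have {}IH := IH (fun g Hg => H g (or_intror Hg)).
set W := f0 @: R :|: Vs s.
set S := [set v | f v \notin W].
have SR : S \subset ~: R.
  apply/subsetP => v; rewrite !inE => Hv; apply/negP => vR.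
  by move: Hv; rewrite fR // (imset_f _ vR).
have cardW : #|f0 @: R :|: Vs (f :: s)| = (#|W| + #|S|)%N.
  have -> : f0 @: R :|: Vs (f :: s) = W :|: f @: S.
    apply/setP => z; rewrite /Vs big_cons -/(Vs s) /W !inE.
    case: (boolP (z \in f0 @: R)) => Hz0 //=.
    case: (boolP (z \in Vs s)) => Hz /=; rewrite ?orbT ?orbF //.
    apply/imsetP/imsetP => [[v _ zv]|[v _ ->]]; last by exists v.
    exists v => //; rewrite inE /W !inE -zv.
    by rewrite (negbTE Hz0) (negbTE Hz).
  rewrite cardsU (card_imset _ finj).
  suff -> : W :&: f @: S = set0 by rewrite cards0 subn0.
  apply/setP => z; rewrite in_set0; apply/negbTE/negP => /setIP [zW /imsetP [v]].
  by rewrite inE => /negP vS zv; apply: vS; rewrite -zv.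
set Enew := (fun e : {set V} => f @: e) @: [set e in edges adj | e :&: S != set0].
have cardEnew : #|Enew| = eS adj S by rewrite /eS card_imset //; apply: imset_inj.
have cardE : (#|Enew| + #|Es s| <= #|Es (f :: s)|)%N.
  have -> : (#|Enew| + #|Es s| = #|Enew :|: Es s|)%N.
    rewrite cardsU.
    suff -> : Enew :&: Es s = set0 by rewrite cards0 subn0.
    apply/setP => e'; rewrite in_set0; apply/negbTE/negP => /setIP [/imsetP [e]].
    rewrite inE => /andP [_ /set0Pn [v]]; rewrite !inE => /andP [ve vS] -> /Es_sub sub.
    have : f v \in Vs s by apply: (subsetP sub); apply: imset_f.
    by move=> fv; move: vS; rewrite fv orbT.
  apply: subset_leq_card; rewrite /Es big_cons -/(Es s); apply: setSU.
  rewrite copy_edgesE; apply: imsetS; apply/subsetP => e; rewrite inE => /andP [].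
  by move=> ->.
rewrite cardW natrD -addrAC mulrDr.
apply: (@le_trans _ _ ((#|Enew| + #|Es s|)%N%:R)); last by rewrite ler_nat.
rewrite natrD cardEnew [X in _ <= X]addrC.
by apply: lerD => //; apply: rho_le0.
Qed.

Lemma Vs_map (I : finType) (phi : I -> V -> U) :
  Vs [seq phi i | i <- index_enum I] = \bigcup_(i : I) copy_verts (phi i).
Proof. by rewrite /Vs big_map. Qed.

Lemma Es_map (I : finType) (phi : I -> V -> U) :
  Es [seq phi i | i <- index_enum I] = \bigcup_(i : I) copy_edges adj (phi i).
Proof. by rewrite /Es big_map. Qed.

End Aux.

Theorem lemma4p1 (V : finType) (adj : rel V) (R : {set V})
    (U : finType) (l : nat) (phi : 'I_l -> V -> U) :
  symmetric adj -> irreflexive adj ->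
  R \proper [set: V] ->
  (1 <= l)%N ->
  (forall i, injective (phi i)) ->
  (forall i j r, r \in R -> phi i r = phi j r) ->
  (forall i j, i != j ->
     (copy_verts (phi i), copy_edges adj (phi i))
       != (copy_verts (phi j), copy_edges adj (phi j))) ->
  rho adj R * ((#|union_verts phi|)%:R - (#|R|)%:R)
    <= (#|union_edges adj phi|)%:R :> rat.
Proof.
move=> _ _ _ l1 inj agree _.
pose i0 : 'I_l := Ordinal l1.
have H := @main_ind V U adj R (phi i0) (inj i0) [seq phi i | i <- index_enum 'I_l].
rewrite /union_verts /union_edges -(@Vs_map V U _ phi) -(@Es_map V U adj _ phi).
have sub : phi i0 @: R \subset Vs V U [seq phi i | i <- index_enum 'I_l].
  rewrite (@Vs_map V U _ phi); apply: subset_trans (bigcup_sup i0 isT).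
  by apply: imsetS; apply: subsetT.
rewrite -(setUidPr sub); apply: H => g /List.in_map_iff [i [<- _]].
by split => // r rR; apply: agree.
Qed.
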